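(* In the Standing Setup with $R=-v(X-w)$ ($v,w\in\mathbb F$), for every $h\in\mathbb Z$: $$d_{h-2}d_{h-1}^2d_h^3d_{h+1}^2d_{h+2}=-v^3\bigl((g+d_he_h)+w(f+d_h)+w^3\bigr)=v^2\,d_{h-1}d_h^2d_{h+1}-v^3\,(g+wf+w^3).$$
   Context: Standing Setup. $\mathbb F$ is a field of characteristic not $2$ or $3$; $f,g\in\mathbb F$; $A=X^3+fX+g\in\mathbb F[X]$; $R\in\mathbb F[X]$ is a polynomial of degree at most $2$; $D=A^2+4R$; $Y$ satisfies $Y^2=D(X)$, $Z=\tfrac12(Y+A)$ and $\overline Z=\tfrac12(-Y+A)$, so $Z+\overline Z=A$ and $Z\overline Z=-R$. We are given sequences $(u_h),(v_h),(w_h),(d_h),(e_h)$ of elements of $\mathbb F$ indexed by $h\in\mathbb Z$, with all $u_h\neq0$, such that for every $h\in\mathbb Z$ the following two identities hold in $\mathbb F[X]$: (i) $A+d_h(X+e_h)+d_{h+1}(X+e_{h+1})=(X+v_h)(X^2-v_hX+w_h)$; (ii) $-u_hu_{h+1}(X^2-v_hX+w_h)(X^2-v_{h+1}X+w_{h+1})=d_{h+1}^2(X+e_{h+1})^2+d_{h+1}(X+e_{h+1})A-R$. (These say that $Z_h=\bigl(Z+d_h(X+e_h)\bigr)/\bigl(u_h(X^2-v_hX+w_h)\bigr)$ are consecutive complete quotients of a continued fraction expansion with partial quotients $(X+v_h)/u_h$.) *)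

(* Defs.v *)
From HB Require Import structures.
From mathcomp Require Import all_boot all_order all_algebra.
Set Implicit Arguments. Unset Strict Implicit. Unset Printing Implicit Defensive.
Import Order.TTheory GRing.Theory Num.Theory.
Local Open Scope ring_scope.

Definition cubicA (F : fieldType) (f g : F) : {poly F} :=
  'X^3 + f%:P * 'X + g%:P.

Definition ident_i (F : fieldType) (f g : F)
    (vs ws d e : int -> F) (h : int) : Prop :=
  cubicA f g + (d h)%:P * ('X + (e h)%:P) + (d (h + 1))%:P * ('X + (e (h + 1))%:P)
  = ('X + (vs h)%:P) * ('X^2 - (vs h)%:P * 'X + (ws h)%:P).

Definition ident_ii (F : fieldType) (f g : F) (R : {poly F})
    (u vs ws d e : int -> F) (h : int) : Prop :=
  - ((u h) * (u (h + 1)))%:P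
      * ('X^2 - (vs h)%:P * 'X + (ws h)%:P)
      * ('X^2 - (vs (h + 1))%:P * 'X + (ws (h + 1))%:P)
  = (d (h + 1) ^+ 2)%:P * ('X + (e (h + 1))%:P) ^+ 2
    + (d (h + 1))%:P * ('X + (e (h + 1))%:P) * cubicA f g - R.

(* Main.v *)
Require Import Defs.
From HB Require Import structures.
From mathcomp Require Import all_boot all_order all_algebra.
From mathcomp Require Import ring.
Import Order.TTheory GRing.Theory Num.Theory.
Local Open Scope ring_scope.

Section Aux.
Variable F : fieldType.

Lemma coef2_eq0 (c0 c1 : F) : c1%:P * 'X + c0%:P = 0 -> c1 = 0 /\ c0 = 0.
Proof.
move=> H; split.
- by have := congr1 (fun p : {poly F} => p`_1) H;
     rewrite !coefD coefCM coefX coefC /= coef0 addr0 mulr1.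
- by have := congr1 (fun p : {poly F} => p`_0) H;
     rewrite !coefD coefCM coefX coefC /= coef0 mulr0 add0r.
Qed.

Lemma coef4_eq0 (c0 c1 c2 c3 c4 : F) :
  c4%:P * 'X^4 + c3%:P * 'X^3 + c2%:P * 'X^2 + c1%:P * 'X + c0%:P = 0 ->
  [/\ c4 = 0, c3 = 0, c2 = 0, c1 = 0 & c0 = 0].
Proof.
move=> H.
have C i := congr1 (fun p : {poly F} => p`_i) H.
have := C 4%N; have := C 3%N; have := C 2%N; have := C 1%N; have := C 0%N.
rewrite /= !coefD !coefCM !coefXn !coefX !coefC ?coef0 /=.
rewrite !mulr0 !mulr1 !addr0 !add0r.
by move=> -> -> -> -> ->.
Qed.

Lemma core (f g v w a b c k dm D dp E Ep : F) :
  D != 0 -> dp != 0 ->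
  - D * (a + c) - D * E = 0 ->
  D * (b + k + a * c) - D ^+ 2 - D * f = 0 ->
  - D * (a * k + b * c) - 2 * D ^+ 2 * E - D * (g + f * E) - v = 0 ->
  D * (b * k) - D ^+ 2 * E ^+ 2 - D * g * E + v * w = 0 ->
  f + dm + D - b + a ^+ 2 = 0 ->
  f + D + dp - k + c ^+ 2 = 0 ->
  g + D * E + dp * Ep - c * k = 0 ->
  [/\ dm * D * dp = - v * (w + E),
      w ^+ 2 - c * w + k = (w + E) * (w + Ep) &
      D * (w ^+ 2 - a * w + b) * (w ^+ 2 - c * w + k)
        = D ^+ 2 * (w + E) ^+ 2 + D * (w + E) * (w ^+ 3 + f * w + g)].
Proof.
move=> D0 dp0 h3 h2 h1 h0 i1m i1 i0.
have E2 : D * (w ^+ 2 - a * w + b) * (w ^+ 2 - c * w + k)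
        = D ^+ 2 * (w + E) ^+ 2 + D * (w + E) * (w ^+ 3 + f * w + g).
  apply/eqP; rewrite -subr_eq0; apply/eqP.
  rewrite (_ : _ - _ = w ^+ 3 * (- D * (a + c) - D * E)
     + w ^+ 2 * (D * (b + k + a * c) - D ^+ 2 - D * f)
     + w * (- D * (a * k + b * c) - 2 * D ^+ 2 * E - D * (g + f * E) - v)
     + (D * (b * k) - D ^+ 2 * E ^+ 2 - D * g * E + v * w)); last by ring.
  by rewrite h3 h2 h1 h0 !mulr0 !addr0.
have Hvw : v * w = D ^+ 2 * E ^+ 2 + D * g * E - D * (b * k).
  apply/eqP; rewrite -subr_eq0; apply/eqP; rewrite -h0; ring.
have Hv : v = - D * (a * k + b * c) - 2 * D ^+ 2 * E - D * (g + f * E).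
  apply/eqP; rewrite -subr_eq0; apply/eqP; rewrite -oppr0 -h1; ring.
have HE : E = - (a + c).
  apply/eqP; rewrite -subr_eq0; apply/eqP.
  have : D * (- (a + c) - E) = 0 by rewrite -h3; ring.
  move/eqP; rewrite mulf_eq0 (negbTE D0) /= => /eqP H3.
  by rewrite -oppr0 -H3; ring.
have Hg : g = c * k - D * E - dp * Ep.
  apply/eqP; rewrite -subr_eq0; apply/eqP; rewrite -i0; ring.
have Hk : k = c ^+ 2 + f + D + dp.
  apply/eqP; rewrite -subr_eq0; apply/eqP; rewrite -oppr0 -i1; ring.
have Hb : b = a ^+ 2 + f + dm + D.
  apply/eqP; rewrite -subr_eq0; apply/eqP; rewrite -oppr0 -i1m; ring.
have Z : b + k + a * c - D - f = 0.
  have : D * (b + k + a * c - D - f) = 0 by rewrite -h2; ring.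
  by move/eqP; rewrite mulf_eq0 (negbTE D0) /= => /eqP.
have Hf : f = - (a ^+ 2 + a * c + c ^+ 2 + dm + D + dp).
  apply/eqP; rewrite -subr_eq0; apply/eqP; rewrite -Z Hb Hk; ring.
have V1 : v = D * dp * (c + E + Ep).
  rewrite Hv Hg Hk Hb HE Hf; ring.
have V0 : v * w = D * dp * (k - E * Ep).
  rewrite Hvw Hg Hk Hb HE Hf; ring.
have Q : E ^+ 2 + c * E + k = - dm.
  rewrite Hk HE Hf; ring.
split => //.
- have -> : dm = - (E ^+ 2 + c * E + k) by rewrite Q opprK.
  rewrite (_ : - v * (w + E) = - (v * w) - v * E); last by ring.
  rewrite V0 V1; ring.
- apply/eqP; rewrite -subr_eq0; apply/eqP.
  have : D * dp * (w ^+ 2 - c * w + k - (w + E) * (w + Ep)) = 0.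
    rewrite (_ : _ * _ = - (D * dp * (c + E + Ep)) * w + D * dp * (k - E * Ep));
      last by ring.
    by rewrite -V1 -V0 mulNr addNr.
  by move/eqP; rewrite !mulf_eq0 (negbTE D0) (negbTE dp0) /= => /eqP.
Qed.

End Aux.

Theorem mainTheorem9 (F : fieldType)
    (hchar : (2%N \notin [pchar F]) /\ (3%N \notin [pchar F]))
    (f g v w : F) (u vs ws d e : int -> F)
    (hu : forall h : int, u h != 0)
    (hi : forall h : int, ident_i f g vs ws d e h)
    (hii : forall h : int, ident_ii f g (- (v%:P * ('X - w%:P))) u vs ws d e h) :
  forall h : int,
    d (h - 2) * d (h - 1) ^+ 2 * d h ^+ 3 * d (h + 1) ^+ 2 * d (h + 2)
      = - v ^+ 3 * ((g + d h * e h) + w * (f + d h) + w ^+ 3)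
    /\ - v ^+ 3 * ((g + d h * e h) + w * (f + d h) + w ^+ 3)
      = v ^+ 2 * d (h - 1) * d h ^+ 2 * d (h + 1) - v ^+ 3 * (g + w * f + w ^+ 3).
Proof.
have Hi j : f + d j + d (j + 1) - ws j + vs j ^+ 2 = 0
          /\ g + d j * e j + d (j + 1) * e (j + 1) - vs j * ws j = 0.
  apply: coef2_eq0.
  have H := hi j; rewrite /ident_i /cubicA in H.
  move/eqP: H; rewrite -subr_eq0 => /eqP H.
  rewrite -H; ring.
have Hii j :
   [/\ - (u j * u (j + 1)) - d (j + 1) = 0,
       - - (u j * u (j + 1)) * (vs j + vs (j + 1)) - d (j + 1) * e (j + 1) = 0,
       - (u j * u (j + 1)) * (ws j + ws (j + 1) + vs j * vs (j + 1))
          - d (j + 1) ^+ 2 - d (j + 1) * f = 0,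
       - - (u j * u (j + 1)) * (vs j * ws (j + 1) + ws j * vs (j + 1))
          - 2 * d (j + 1) ^+ 2 * e (j + 1) - d (j + 1) * (g + f * e (j + 1)) - v = 0 &
       - (u j * u (j + 1)) * (ws j * ws (j + 1)) - d (j + 1) ^+ 2 * e (j + 1) ^+ 2
          - d (j + 1) * g * e (j + 1) + v * w = 0].
  apply: coef4_eq0.
  have H := hii j; rewrite /ident_ii /cubicA in H.
  move/eqP: H; rewrite -subr_eq0 => /eqP H.
  rewrite -H; ring.
have Dnz j : d j != 0.
  have [c4 _ _ _ _] := Hii (j - 1).
  rewrite subrK in c4.
  have -> : d j = - (u (j - 1) * u j).
    by apply/eqP; rewrite eq_sym -subr_eq0; apply/eqP.
  by rewrite oppr_eq0 mulf_neq0.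
have C j :
  [/\ d (j - 1) * d j * d (j + 1) = - v * (w + e j),
      w ^+ 2 - vs j * w + ws j = (w + e j) * (w + e (j + 1)) &
      d j * (w ^+ 2 - vs (j - 1) * w + ws (j - 1)) * (w ^+ 2 - vs j * w + ws j)
        = d j ^+ 2 * (w + e j) ^+ 2 + d j * (w + e j) * (w ^+ 3 + f * w + g)].
  have [c4 c3 c2 c1 c0] := Hii (j - 1).
  rewrite !subrK in c4 c3 c2 c1 c0.
  have U : - (u (j - 1) * u j) = d j.
    by apply/eqP; rewrite -subr_eq0; apply/eqP.
  rewrite U in c3 c2 c1 c0.
  have [i1m _] := Hi (j - 1); rewrite subrK in i1m.
  have [i1 i0] := Hi j.
  exact: core (Dnz j) (Dnz (j + 1)) c3 c2 c1 c0 i1m i1 i0.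
move=> h.
have [K1 T1 _] := C (h - 1).
have [K2 T2 E2] := C h.
have [K3 _ _] := C (h + 1).
have e1 : h - 1 - 1 = h - 2 by ring.
have e2 : h + 1 - 1 = h by ring.
have e3 : h + 1 + 1 = h + 2 by ring.
rewrite e1 subrK in K1 T1.
rewrite e2 e3 in K3.
rewrite T1 T2 in E2.
have x2nz : w + e h != 0.
  apply/eqP => H0; move: K2; rewrite H0 mulr0 => /eqP.
  by rewrite !mulf_eq0 !(negbTE (Dnz _)).
have key : (w + e (h - 1)) * (w + e h) * (w + e (h + 1))
           = d h * (w + e h) + (w ^+ 3 + f * w + g).
  have : d h * (w + e h) * ((w + e (h - 1)) * (w + e h) * (w + e (h + 1))
           - (d h * (w + e h) + (w ^+ 3 + f * w + g))) = 0.
    rewrite (_ : _ * _ = d h * ((w + e (h - 1)) * (w + e h)) *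
         ((w + e h) * (w + e (h + 1))) - (d h ^+ 2 * (w + e h) ^+ 2 +
         d h * (w + e h) * (w ^+ 3 + f * w + g))); last by ring.
    by rewrite E2 subrr.
  move/eqP; rewrite !mulf_eq0 (negbTE (Dnz _)) (negbTE x2nz) /= subr_eq0.
  by move/eqP.
split.
- rewrite (_ : _ * _ = (d (h - 2) * d (h - 1) * d h) * (d (h - 1) * d h * d (h + 1))
                       * (d h * d (h + 1) * d (h + 2))); last by ring.
  rewrite K1 K2 K3.
  rewrite (_ : - v * (w + e (h - 1)) * (- v * (w + e h)) * (- v * (w + e (h + 1)))
     = - v ^+ 3 * ((w + e (h - 1)) * (w + e h) * (w + e (h + 1))));
    last by ring.
  rewrite key; ring.
- rewrite (_ : v ^+ 2 * d (h - 1) * d h ^+ 2 * d (h + 1)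
             = v ^+ 2 * d h * (d (h - 1) * d h * d (h + 1))); last by ring.
  rewrite K2; ring.
Qed.
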